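(* Let $A \in \mathbb{R}^{m\times n}$ be semimonotone, i.e. $A^{\dagger}\geq 0$, and let $A=U-V$ be a proper weak regular splitting of type II of $A$. Suppose that $\rho(U^{\dagger}V)>0$. Then there exists a vector $x\in\mathbb{R}^n$ with $x\geq 0$, $x\neq 0$, such that $U^{\dagger}Vx=\rho(U^{\dagger}V)x$, $Ax\geq 0$ with $Ax\neq 0$, and $Vx\geq 0$ with $Vx\neq 0$.
   Context: $A^{\dagger}$ denotes the Moore–Penrose inverse and $\rho(\cdot)$ the spectral radius. Inequalities between matrices/vectors are entrywise. A splitting $A=U-V$ (with $U,V$ of the same size as $A$) is proper if $R(U)=R(A)$ and $N(U)=N(A)$ (range and null space). A proper splitting $A=U-V$ is a proper weak regular splitting of type II if $U^{\dagger}\geq 0$ and $VU^{\dagger}\geq 0$. *)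

(* Defs.v *)
From HB Require Import structures.
From mathcomp Require Import all_boot all_order all_algebra.
From mathcomp Require Import complex.
Set Implicit Arguments. Unset Strict Implicit. Unset Printing Implicit Defensive.
Import Order.TTheory GRing.Theory Num.Theory.
Local Open Scope ring_scope.
Local Open Scope complex_scope.

Section Defs.
Variable R : rcfType.

Definition mx_nonneg (m n : nat) (M : 'M[R]_(m, n)) : Prop :=
  forall i j, 0 <= M i j.

Definition is_MP_inverse (m n : nat) (A : 'M[R]_(m, n)) (X : 'M[R]_(n, m)) : Prop :=
  [/\ A *m X *m A = A, X *m A *m X = X,
      (A *m X)^T = A *m X & (X *m A)^T = X *m A].

(* complex eigenvalues (with multiplicity) of a real square matrix:
   the roots of its characteristic polynomial in R[i] *)
Definition eigs (n : nat) (M : 'M[R]_n) : seq R[i] :=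
  sval (closed_field_poly_normal (char_poly (map_mx (real_complex R) M))).

Definition cmod (z : R[i]) : R := let: Complex a b := z in Num.sqrt (a ^+ 2 + b ^+ 2).

(* spectral radius: max modulus of the eigenvalues (0 for the empty matrix) *)
Definition spectral_radius (n : nat) (M : 'M[R]_n) : R :=
  \big[Num.max/0]_(z <- eigs M) cmod z.

(* range and null space of column-vector maps x |-> M x *)
Definition proper_splitting (m n : nat) (A U V : 'M[R]_(m, n)) : Prop :=
  [/\ A = U - V,
      (forall y : 'cV[R]_m, (exists x : 'cV[R]_n, y = U *m x) <->
                             (exists x : 'cV[R]_n, y = A *m x))
    & (forall x : 'cV[R]_n, U *m x = 0 <-> A *m x = 0)].

(* A = U - V is a proper weak regular splitting of type II, Ud being U^dagger *)
Definition proper_weak_regular_II (m n : nat) (A U V : 'M[R]_(m, n))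
    (Ud : 'M[R]_(n, m)) : Prop :=
  [/\ proper_splitting A U V, mx_nonneg Ud & mx_nonneg (V *m Ud)].

End Defs.

(* Main.v *)
Require Import Defs.
From HB Require Import structures.
From mathcomp Require Import all_boot all_order all_algebra.
From mathcomp Require Import complex.
From mathcomp Require Import polyrcf lra.
Import Order.TTheory GRing.Theory Num.Theory.
Local Open Scope ring_scope.
Local Open Scope complex_scope.

Lemma neg_near0 (R : rcfType) (f : {poly R}) k :
  (forall j, (j < k)%N -> f`_j = 0) -> f`_k < 0 -> exists2 t, 0 < t & f.[t] < 0.
Proof.
move=> Hlow Hk.
set g := drop_poly k f.
have Ht : take_poly k f = 0.
  by apply/polyP => i; rewrite coef_take_poly coef0; case: ifP => // /Hlow.
have Hf : f = g * 'X^k by rewrite -{1}(poly_take_drop k f) Ht add0r.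
have Hg0 : g.[0] < 0 by rewrite horner_coef0 coef_drop_poly add0n.
have Hng : 0 < - g.[0] by rewrite oppr_gt0.
have [d d0 Hd] := poly_cont 0 g Hng.
exists (d / 2); first by rewrite divr_gt0.
have : `|d / 2 - 0| < d.
  by rewrite subr0 ger0_norm ?divr_ge0 ?ltW // ltr_pdivrMr // ltr_pMr // ltr1n.
move=> /Hd H.
have Hgt : g.[d / 2] < 0.
  have := le_lt_trans (ler_norm _) H.
  by rewrite ltrBlDr addrC subrr.
rewrite Hf hornerM hornerXn pmulr_llt0 // exprn_gt0 // divr_gt0 //.
Qed.

Lemma exists_max {T : finType} {R : realDomainType} (i0 : T) (F : T -> R) :
  exists i, forall j, F j <= F i.
Proof. by case: (@arg_maxP _ _ T i0 xpredT F isT) => i _ H; exists i => j; apply: H. Qed.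

Lemma exists_min {T : finType} {R : realDomainType} (i0 : T) (F : T -> R) :
  exists i, forall j, F i <= F j.
Proof. by case: (@arg_minP _ _ T i0 xpredT F isT) => i _ H; exists i => j; apply: H. Qed.

Lemma normE {R : rcfType} (z : R[i]) : `|z| = (cmod z)%:C.
Proof. by case: z. Qed.

Lemma cmod_ge0 {R : rcfType} (z : R[i]) : 0 <= cmod z.
Proof. by rewrite -ler0c -normE. Qed.

Lemma cmodM {R : rcfType} (z w : R[i]) : cmod (z * w) = cmod z * cmod w.
Proof. by apply: complexI; rewrite rmorphM /= -!normE normrM. Qed.

Lemma cmod_eq0 {R : rcfType} (z : R[i]) : (cmod z == 0) = (z == 0).
Proof.
by rewrite -[z == 0]normr_eq0 normE; apply/eqP/eqP => [->//|/complexI].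
Qed.

Lemma cmodR {R : rcfType} (x : R) : cmod (x%:C) = `|x|.
Proof. rewrite /cmod /=; change (Num.sqrt (x ^+ 2 + 0 ^+ 2) = `|x|). by rewrite expr0n addr0 sqrtr_sqr. Qed.

Lemma nz_entry {R : zmodType} {m} {v : 'cV[R]_m} : v != 0 -> exists i, v i 0 != 0.
Proof.
move=> vn0; apply/existsP; apply: contraNT vn0 => /existsPn H.
by apply/eqP/matrixP => i j; rewrite ord1 mxE; apply/eqP; move: (H i); rewrite negbK.
Qed.

Lemma gersh (R : rcfType) m (B : 'M[R]_m) (c : 'cV[R]_m) (r : R) (lam : R[i])
    (v : 'cV[R[i]]_m) :
  mx_nonneg B -> (forall i, 0 < c i 0) -> (forall i, (B *m c) i 0 < r * c i 0) ->
  v != 0 -> map_mx (real_complex R) B *m v = lam *: v -> cmod lam < r.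
Proof.
move=> B0 c0 Bc vn0 Hv.
have [i0 Hi0] := nz_entry vn0.
pose nv j := cmod (v j 0).
have [i Hi] := exists_max i0 (fun j => nv j / c j 0).
set M := nv i / c i 0 in Hi.
have nvi0 : 0 < nv i0 by rewrite lt0r cmod_eq0 Hi0 cmod_ge0.
have M0 : 0 < M by apply: lt_le_trans (Hi i0); rewrite divr_gt0.
have Hj j : nv j <= M * c j 0.
  by rewrite -ler_pdivrMr // Hi.
have nvi : 0 < nv i by move: M0; rewrite /M pmulr_lgt0 // invr_gt0.
have key : cmod lam * nv i <= \sum_j B i j * nv j.
  rewrite -lecR -cmodM rmorph_sum /= -normE.
  have -> : lam * v i 0 = (lam *: v) i 0 by rewrite mxE.
  rewrite -Hv mxE (le_trans (ler_norm_sum _ _ _)) //.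
  apply: ler_sum => j _; rewrite mxE normrM (normE (B i j)%:C) (normE (v j 0)) cmodR ger0_norm // rmorphM // ler0c.

have H2 : \sum_j B i j * nv j <= M * (B *m c) i 0.
  rewrite mxE mulr_sumr; apply: ler_sum => k _.
  by rewrite mulrCA ler_wpM2l // Hj.
have H3 : M * (B *m c) i 0 < r * nv i.
  apply: (lt_le_trans (_ : _ < M * (r * c i 0))); first by rewrite ltr_pM2l.
  by rewrite mulrCA /M divfK // gt_eqF.
by rewrite -(ltr_pM2r nvi); apply: le_lt_trans key (le_lt_trans H2 H3).
Qed.

Lemma PF (R : rcfType) m (B : 'M[R]_m) (r : R) (lam : R[i]) (v : 'cV[R[i]]_m) :
  mx_nonneg B -> 0 < r -> v != 0 ->
  map_mx (real_complex R) B *m v = lam *: v -> cmod lam = r ->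
  (forall (s : R) (w : 'rV[R]_m), r < s -> w *m B = s *: w -> w = 0) ->
  exists2 c : 'cV[R]_m, mx_nonneg c /\ c != 0 & B *m c = r *: c.
Proof.
move=> B0 r0 vn0 Hv Hlam Hno.
have [i0 _] := nz_entry vn0.
pose C := B - r%:M.
pose P := char_poly_mx C.
pose p := char_poly C.
pose Q := \adj P *m const_mx 1 : 'cV[{poly R}]_m.
pose q i := Q i 0.
have Cx (T : comPzRingType) (f : {rmorphism R -> T}) (x : 'I_m -> T) i :
    \sum_j f (C i j) * x j = \sum_j f (B i j) * x j - f r * x i.
  rewrite (bigD1 i) //= [X in _ = X - _](bigD1 i) //= !mxE eqxx /=.
  rewrite rmorphB /= mulrBl addrAC mulr1n; congr (_ + _ - _).
  by apply: eq_bigr => j /negPf ji; rewrite /C !mxE eq_sym ji mulr0n subr0.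
have EI i : 'X * q i - \sum_j (C i j)%:P * q j = p.
  have : (P *m Q) i 0 = p.
    by rewrite /Q mulmxA mul_mx_adj mul_scalar_mx !mxE mulr1.
  rewrite /P /char_poly_mx mulmxBl mul_scalar_mx !mxE => <-; congr (_ - _).
  by rewrite /q /Q mxE.
  by apply: eq_bigr => j _; rewrite [in RHS]mxE.
have Eval t i : (t + r) * (q i).[t] = p.[t] + \sum_j B i j * (q j).[t].
  have := congr1 (horner^~ t) (EI i).
  rewrite hornerD hornerN hornerM hornerX horner_sum.
  under eq_bigr do rewrite hornerM hornerC.
  have := Cx R idfun (fun j => (q j).[t]) i; rewrite /= => -> <-.
  by rewrite mulrDl; lra.
have Coef k i : (if k is k'.+1 then (q i)`_k' else 0)
    - (\sum_j B i j * (q j)`_k - r * (q i)`_k) = p`_k.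
  have := congr1 (fun f : {poly R} => f`_k) (EI i).
  rewrite coefB coefXM coef_sum.
  under eq_bigr do rewrite coefCM.
  have := Cx R idfun (fun j => (q j)`_k) i; rewrite /= => -> <-.
  by case: k.
have pos_p t : 0 < t -> 0 < p.[t].
  move=> t0.
  have nr u : t <= u -> ~~ root p u.
    move=> tu; apply/negP; rewrite -eigenvalue_root_char => /eigenvalueP [w Hw wn0].
    have := Hno (u + r) w; rewrite ltrDr (lt_le_trans t0 tu) => /(_ isT).
    move=> H; move/eqP: wn0; apply; apply: H.
    by move: Hw; rewrite /C mulmxBr mul_mx_scalar scalerDl => <-; rewrite subrK.
  have H1 : {in `[t, +oo[, forall u, ~~ root p u}.
    by move=> u; rewrite in_itv /= andbT => /nr.
  have := sgp_pinftyP H1 (_ : t \in `[t, +oo[).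
  rewrite in_itv /= lexx /sgp_pinfty (monicP (char_poly_monic C)) sgr1.
  by move=> /(_ isT) /eqP; rewrite sgr_cp0.
have pos_entry t : 0 < t -> (forall j, 0 <= (q j).[t]) -> forall i, 0 < (q i).[t].
  move=> t0 H i.
  have S : 0 <= \sum_j B i j * (q j).[t].
    by apply: sumr_ge0 => j _; apply: mulr_ge0.
  have E := Eval t i; have pp := pos_p t t0.
  have : 0 < (t + r) * (q i).[t] by rewrite E; lra.
  by rewrite pmulr_rgt0 // addr_gt0.
have sB : 0 <= \sum_i \sum_j B i j.
  by apply: sumr_ge0 => k _; apply: sumr_ge0.
have big_pos t : 0 < t -> \sum_i \sum_j B i j < t -> forall j, 0 <= (q j).[t].
  move=> t0 tL.
  have [i Hi] := exists_min i0 (fun j => (q j).[t]).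
  suff : 0 <= (q i).[t] by move=> H j; apply: le_trans (Hi j).
  rewrite leNgt; apply/negP => neg.
  have E := Eval t i; have pp := pos_p t t0.
  have S1 : (\sum_j B i j) * (q i).[t] <= \sum_j B i j * (q j).[t].
    rewrite mulr_suml; apply: ler_sum => j _; apply: ler_wpM2l; [exact: B0 | exact: Hi].
  have S2 : \sum_j B i j <= \sum_i \sum_j B i j.
    rewrite [X in _ <= X](bigD1 i) //= lerDl; apply: sumr_ge0 => k _; apply: sumr_ge0 => l _.
    exact: B0.
  nra.
have KL t1 : 0 < t1 -> forall i, 0 <= (q i).[t1].
  move=> t10 i; rewrite leNgt; apply/negP => neg.
  pose L := t1 + 1 + \sum_i \sum_j B i j.
  have L0 : 0 < L by rewrite /L; lra.
  have t1L : t1 < L by rewrite /L; lra.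
  have qL j : 0 < (q j).[L].
    by apply: pos_entry => // k; apply: big_pos => //; rewrite /L; lra.
  pose G := \prod_j q j.
  have rootG z j : root (q j) z -> root G z.
    rewrite /root horner_prod => /eqP H; apply/eqP.
    by rewrite (bigD1 j) //= H mul0r.
  have ivt j y : y < L -> (q j).[y] < 0 -> exists2 z, z \in `]y, L[ & root G z.
    move=> yL qy.
    have H : (q j).[y] * (q j).[L] < 0 by rewrite pmulr_llt0.
    have [z zin rz] := poly_ivtoo (ltW yL) H.
    by exists z => //; apply: rootG rz.
  case: (prev_rootP G t1 L).
  - move=> G0; have := congr1 (horner^~ L) G0.
    rewrite /= horner_prod hornerC => H.
    have : 0 < \prod_j (q j).[L] by apply: prodr_gt0 => j _.
    by rewrite H ltxx.
  - move=> y Gn0 Gy0 yin Hnr.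
    have y0 : 0 < y by apply: lt_trans t10 _; rewrite (itvP yin).
    have yL : y < L by rewrite (itvP yin).
    have all j : 0 <= (q j).[y].
      rewrite leNgt; apply/negP => /(ivt j y yL) [z zin rz].
      by have := Hnr z zin; rewrite rz.
    have : 0 < G.[y].
      by rewrite horner_prod; apply: prodr_gt0 => j _; apply: pos_entry.
    by rewrite Gy0 ltxx.
  - move=> c Gn0 cE Hnr.
    have [z zin rz] := ivt i t1 t1L neg.
    by have := Hnr z zin; rewrite rz.
have ex : exists k, [exists i, (q i)`_k != 0].
  have q1 : 0 < (q i0).[1] by apply: pos_entry => // j; apply: KL.
  have qn0 : q i0 != 0 by apply: contraTneq q1 => ->; rewrite horner0 ltxx.
  exists (size (q i0)).-1; apply/existsP; exists i0.
  by rewrite -lead_coefE lead_coef_eq0.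
case: (ex_minnP ex) => k0 /existsP [i1 Hi1] Hmin.
have low j i : (j < k0)%N -> (q i)`_j = 0.
  move=> jk; apply/eqP; apply: contraTT jk => H; rewrite -leqNgt; apply: Hmin.
  by apply/existsP; exists i.
pose c := \col_i (q i)`_k0.
have c0 i : 0 <= c i 0.
  rewrite mxE leNgt; apply/negP => neg.
  have [t t0 qt] := @neg_near0 _ _ k0 (fun j jk => low j i jk) neg.
  by have := KL t t0 i; rewrite leNgt qt.
have cn0 : c != 0.
  by apply/eqP => /matrixP /(_ i1 0); rewrite !mxE; apply/eqP.
have sum0 j i : (j < k0)%N -> \sum_k B i k * (q k)`_j = 0.
  by move=> jk; apply: big1 => k _; rewrite low // mulr0.
have plow j : (j < k0)%N -> p`_j = 0.
  move=> jk; rewrite -(Coef j i0) sum0 // low // mulr0 !subr0.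
  by case: j jk => [|j] jk //; rewrite low // ltnW.
have Ck i : - (\sum_j B i j * c j 0 - r * c i 0) = p`_k0.
  rewrite -(Coef k0 i).
  have -> : (if k0 is k.+1 then (q i)`_k else 0) = 0.
    have gen n : (forall j, (j < n)%N -> (q i)`_j = 0) ->
        (if n is k.+1 then (q i)`_k else 0) = 0.
      by case: n => [|k] //= H; apply: H.
    by apply: gen => j jk; apply: low.
  rewrite sub0r mxE; congr (- (_ - _)); by apply: eq_bigr => j _; rewrite mxE.
have pk0 : 0 <= p`_k0.
  rewrite leNgt; apply/negP => neg.
  have [t t0 pt] := @neg_near0 _ p k0 plow neg.
  by have := pos_p t t0; rewrite ltNge ltW.
have cnn : mx_nonneg c by move=> i j; rewrite ord1.
case: (eqVneq (p`_k0) 0) => [pz | pnz].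
  exists c => //; apply/matrixP => i j; rewrite ord1 !mxE.
  have := Ck i; rewrite pz => /eqP; rewrite oppr_eq0 subr_eq0 => /eqP E.
  by rewrite E mxE.
have a0 : 0 < p`_k0 by rewrite lt0r pnz.
have cpos i : 0 < c i 0.
  have S : 0 <= \sum_j B i j * c j 0 by apply: sumr_ge0 => j _; apply: mulr_ge0.
  have E := Ck i.
  have : 0 < r * c i 0 by lra.
  by rewrite pmulr_rgt0.
have Bc i : (B *m c) i 0 < r * c i 0.
  rewrite mxE; have := Ck i; lra.
by have := @gersh _ _ _ _ _ _ _ B0 cpos Bc vn0 Hv; rewrite Hlam ltxx.
Qed.

Lemma bigmax_le {R : rcfType} (s : seq R[i]) z :
  z \in s -> cmod z <= \big[Num.max/0]_(w <- s) cmod w.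
Proof.
elim: s => // a s IH; rewrite in_cons big_cons le_max => /orP [/eqP ->|/IH ->].
  by rewrite lexx.
by rewrite orbT.
Qed.

Lemma bigmax_attain {R : rcfType} (s : seq R[i]) :
  0 < \big[Num.max/0]_(w <- s) cmod w ->
  exists2 z, z \in s & cmod z = \big[Num.max/0]_(w <- s) cmod w.
Proof.
elim: s => [|a s IH]; first by rewrite big_nil ltxx.
rewrite big_cons maxEle; case: ifP => H.
  move=> /IH [z zin <-]; exists z => //.
  by rewrite in_cons zin orbT.
by move=> _; exists a; rewrite ?in_cons ?eqxx.
Qed.

Lemma eigsP {R : rcfType} n (M : 'M[R]_n) z :
  root (char_poly (map_mx (real_complex R) M)) z = (z \in eigs M).
Proof.
rewrite /eigs; case: closed_field_poly_normal => s /= Hs.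
by rewrite {1}Hs (monicP (char_poly_monic _)) scale1r root_prod_XsubC.
Qed.

Lemma char_poly_tr {F : fieldType} n (N : 'M[F]_n) : char_poly N^T = char_poly N.
Proof.
rewrite /char_poly /char_poly_mx -[RHS]det_tr; congr (\det _).
by rewrite linearB /= tr_scalar_mx map_trmx.
Qed.

Lemma col_eigen {F : fieldType} n (N : 'M[F]_n) a :
  root (char_poly N) a -> exists2 v : 'cV_n, v != 0 & N *m v = a *: v.
Proof.
rewrite -char_poly_tr -eigenvalue_root_char => /eigenvalueP [v Hv vn0].
exists v^T; first by rewrite trmx_eq0.
by rewrite -[N]trmxK -trmx_mul Hv linearZ.
Qed.

Lemma row_eigen_root {R : rcfType} n (M : 'M[R]_n) s (w : 'rV_n) :
  w != 0 -> w *m M = s *: w -> root (char_poly (map_mx (real_complex R) M)) s%:C.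
Proof.
move=> wn0 Hw.
have : eigenvalue M s by apply/eigenvalueP; exists w.
rewrite eigenvalue_root_char => /(rmorph_root (real_complex R)).
by rewrite map_char_poly.
Qed.

Lemma mx_eq_col {R : pzRingType} m n (M N : 'M[R]_(m, n)) :
  (forall u : 'cV_n, M *m u = N *m u) -> M = N.
Proof.
move=> H; apply/matrixP => i j.
by have := congr1 (fun X : 'M_(m, 1) => X i 0) (H (delta_mx j 0)); rewrite -!colE !mxE.
Qed.

Lemma nonneg_mul {R : rcfType} m n p (M : 'M[R]_(m, n)) (N : 'M[R]_(n, p)) :
  mx_nonneg M -> mx_nonneg N -> mx_nonneg (M *m N).
Proof.
by move=> HM HN i j; rewrite mxE; apply: sumr_ge0 => k _; apply: mulr_ge0.
Qed.

Local Close Scope complex_scope.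

Theorem lemma3p10 (R : rcfType) (m n : nat) (A U V : 'M[R]_(m, n))
    (Ad Ud : 'M[R]_(n, m)) :
  is_MP_inverse A Ad -> mx_nonneg Ad ->
  is_MP_inverse U Ud ->
  proper_weak_regular_II A U V Ud ->
  0 < spectral_radius (Ud *m V) ->
  exists x : 'cV[R]_n,
    [/\ mx_nonneg x, x != 0,
        Ud *m V *m x = spectral_radius (Ud *m V) *: x,
        mx_nonneg (A *m x) /\ A *m x != 0
      & mx_nonneg (V *m x) /\ V *m x != 0].
Proof.
move=> [AAdA _ _ AdAsym] Ad0 [UUdU UdUUd UUdsym UdUsym].
move=> [[AUV Hrange Hnull] Ud0 VUd0] rho0.
set rho := spectral_radius (Ud *m V) in rho0 *.
pose f := real_complex R.
have [lam lamin lamE] := bigmax_attain _ rho0.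
rewrite -eigsP in lamin.
have [v vn0 Hv] := @col_eigen _ _ _ _ lamin.
have {}lamE : cmod lam = rho := lamE.
have lamn0 : lam != 0 by rewrite -cmod_eq0 lamE gt_eqF.
pose w := map_mx f V *m v.
have Bw : map_mx f (V *m Ud) *m w = lam *: w.
  by rewrite /w map_mxM -!mulmxA (mulmxA (map_mx f Ud)) -map_mxM Hv scalemxAr.
have wn0 : w != 0.
  apply: contraNneq vn0 => w0.
  have : lam *: v = 0 by rewrite -Hv map_mxM -mulmxA -/w w0 mulmx0.
  by move/eqP; rewrite scaler_eq0 (negPf lamn0).
have Hno (s : R) (u : 'rV[R]_m) : rho < s -> u *m (V *m Ud) = s *: u -> u = 0.
  move=> rs Hu; apply/eqP; apply: contraT => un0.
  have s0 : 0 < s by apply: lt_trans rs.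
  have u'n0 : u *m V != 0.
    apply: contra un0 => /eqP H.
    have : s *: u == 0 by rewrite -Hu mulmxA H mul0mx.
    by rewrite scaler_eq0 gt_eqF.
  have Hu' : (u *m V) *m (Ud *m V) = s *: (u *m V).
    by rewrite mulmxA -(mulmxA u) Hu scalemxAl.
  have := @row_eigen_root _ _ _ _ _ u'n0 Hu'; rewrite eigsP => /bigmax_le.
  rewrite cmodR ger0_norm; last exact: ltW.
  by move=> H; move: rs; rewrite ltNge; move: H; change (s <= rho -> ~~ (s <= rho) -> false) => ->.
have [y [y0 yn0] By] := @PF _ _ _ _ _ _ VUd0 rho0 wn0 Bw lamE Hno.
pose x := Ud *m y.
have Vx : V *m x = rho *: y by rewrite /x mulmxA By.
have UdVx : Ud *m V *m x = rho *: x by rewrite -mulmxA Vx scalemxAr.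
have xn0 : x != 0.
  apply: contraNneq yn0 => x0.
  have : rho *: y = 0 by rewrite -Vx x0 mulmx0.
  by move/eqP; rewrite scaler_eq0 gt_eqF.
have [z Hz] : exists z, A *m x = U *m z.
  by have [_ H] := Hrange (A *m x); apply: H; exists x.
have Ux : U *m x = y.
  have yE : y = U *m (rho^-1 *: (x - z)).
    rewrite -scalemxAr mulmxBr -Hz -mulmxBl.
    have -> : U - A = V by rewrite AUV opprB addrC subrK.
    by rewrite Vx scalerA mulVf ?gt_eqF // scale1r.
  by rewrite /x {1}yE !mulmxA UUdU -yE.
have Ax : A *m x = (1 - rho) *: y.
  by rewrite {1}AUV mulmxBl Ux Vx scalerBl scale1r.
have UAdA : U *m Ad *m A = U.
  apply: mx_eq_col => u; apply/eqP; rewrite -subr_eq0 -!mulmxA -mulmxBr.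
  apply/eqP/Hnull; rewrite mulmxBr !mulmxA AAdA subrr //.
have AdAUt : Ad *m A *m U^T = U^T.
  by rewrite -AdAsym -trmx_mul mulmxA UAdA.
have AdAx : Ad *m A *m x = x.
  have xE : x = U^T *m (Ud^T *m (Ud *m y)).
    by rewrite /x -{1}UdUUd -UdUsym trmx_mul !mulmxA.
  by rewrite xE !mulmxA AdAUt.
have Adx : (1 - rho) *: (Ad *m y) = x.
  by rewrite scalemxAr -Ax mulmxA AdAx.
have rho1 : rho < 1.
  rewrite ltNge; apply/negP => r1.
  have [i xi] := nz_entry xn0.
  have xi0 : 0 <= x i 0 by rewrite /x; apply: nonneg_mul.
  have : x i 0 <= 0.
    rewrite -Adx mxE; apply: mulr_le0_ge0; first by lra.
    by apply: nonneg_mul.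
  by move=> H; move: xi; rewrite eq_le H xi0.
exists x; split => //.
- by apply: nonneg_mul.
- split; first by rewrite Ax => i j; rewrite mxE; apply: mulr_ge0 => //; lra.
  by rewrite Ax scaler_eq0 negb_or yn0 andbT subr_eq0 eq_sym lt_eqF.
- split; first by rewrite Vx => i j; rewrite mxE; apply: mulr_ge0 => //; apply: ltW.
  by rewrite Vx scaler_eq0 negb_or yn0 andbT gt_eqF.
Qed.
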